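(* Let $K$ be an idempotent ordered TGP-$\omega$-valuation monoid, $AP$ a finite set of atomic propositions, $k\in K\setminus\{\mathbf{0},\mathbf{1}\}$ and $\varphi\in k\text{-}t\text{-}RULTL(K,AP)$. Then $\|\varphi\|:(\mathcal{P}(AP))^{\omega}\to K$ is $k$-safe.
   Context: Idempotent ordered TGP-$\omega$-valuation monoid $(K,+,\cdot,Val^{\omega},\mathbf{0},\mathbf{1})$: complete monoid $(K,+,\mathbf{0})$ (infinitary sums over arbitrary index sets with the usual axioms), idempotent, totally ordered by the natural order $k\le k'$ iff $k'=k'+k$; $Val^{\omega}$ maps finitely-valued sequences in $K$ to $K$; $\cdot$ has zero $\mathbf{0}$ and unit $\mathbf{1}$; $Val^{\omega}=\mathbf{0}$ if some entry is $\mathbf{0}$; $Val^{\omega}(\mathbf{1}^{\omega})=\mathbf{1}$; $\sum_I(k\cdot\mathbf{1})=k\cdot\sum_I\mathbf{1}$; $Val^{\omega}((\sum_{i_j\in I_j}k_{i_j})_j)=\sum_{(i_j)_j\in\prod_j I_j}Val^{\omega}((k_{i_j})_j)$ for finite $I_j$, $k_{i_j}$ in a finite $L\subseteq K$ with each family entirely in $L\setminus\{\mathbf{0},\mathbf{1}\}$ or entirely in $\{\mathbf{0},\mathbf{1}\}$; moreover $Val^{\omega}(\mathbf{1},k_1,\dots)=Val^{\omega}(k_1,\dots)$, $Val^{\omega}(k,\mathbf{1},\mathbf{1},\dots)=k$, $k\le\mathbf{1}$, and $k_i\ge k\ \forall i\Rightarrow Val^{\omega}((k_i)_i)\ge k$.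 Weighted LTL over $AP$ and $K$: $\varphi::=k\mid a\mid\neg a\mid\varphi\vee\varphi\mid\varphi\wedge\varphi\mid\bigcirc\varphi\mid\varphi U\varphi\mid\square\varphi$, with semantics: $(\|k\|,w)=k$; $(\|a\|,w)=\mathbf{1}$ if $a\in w(0)$ else $\mathbf{0}$; $\neg a$ dually; $\vee\mapsto+$, $\wedge\mapsto\cdot$ pointwise; $(\|\bigcirc\varphi\|,w)=(\|\varphi\|,w_{\ge1})$; $(\|\varphi U\psi\|,w)=\sum_{i\ge0}Val^{\omega}((\|\varphi\|,w_{\ge0}),\dots,(\|\varphi\|,w_{\ge i-1}),(\|\psi\|,w_{\ge i}),\mathbf{1},\mathbf{1},\dots)$; $(\|\square\varphi\|,w)=Val^{\omega}(((\|\varphi\|,w_{\ge i}))_{i\ge0})$. $true:=\mathbf{1}$, $\varphi\tilde U\psi:=\square\varphi\vee(\varphi U\psi)$. $sbLTL(K,AP)$: $\varphi::=true\mid a\mid\neg a\mid\varphi\vee\varphi\mid\varphi\wedge\varphi\mid\bigcirc\varphi\mid\varphi\tilde U\varphi\mid\square\varphi$. $L_k=\{k'\in K\mid k'\ge k\}$. $k\text{-}stLTL(K,AP)$: formulas $\bigvee_{1\le i\le n}(k_i\wedge\varphi_i)$, $k_i\in L_k\setminus\{\mathbf{0},\mathbf{1}\}$, $\varphi_i\in sbLTL(K,AP)$. $k\text{-}t\text{-}RULTL(K,AP)$ is the least class of formulas such that: (1) every $k'\in L_k$ is in it; (2) $sbLTL(K,AP)\subseteq$ it; (3) $k\text{-}stLTL(K,AP)\subseteq$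 it; (4) closed under $\bigcirc$; (5) closed under $\vee$; (6) if $\varphi\in sbLTL(K,AP)$ and $\psi\in k\text{-}stLTL(K,AP)$, or $\psi=\xi\tilde U\lambda$, or $\psi=\square\xi$ with $\xi,\lambda\in k\text{-}stLTL(K,AP)$, then $\varphi\wedge\psi,\psi\wedge\varphi$ are in it; (7) if $\varphi,\psi\in k\text{-}stLTL(K,AP)$ then $\varphi\tilde U\psi$ is in it; (8) if $\varphi\in k\text{-}stLTL(K,AP)$ then $\square\varphi$ is in it. A series $s$ is $k$-safe if for every $w$: whenever for every $i>0$ there is $u$ with $(s,w_{<i}u)\ge k$ ($w_{<i}$ the length-$i$ prefix), then $(s,w)\ge k$. *)

(* Defs.v *)
From HB Require Import structures.
From mathcomp Require Import all_boot.
From Stdlib Require List.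

Set Implicit Arguments.
Unset Strict Implicit.
Unset Printing Implicit Defensive.

Definition fin_valued (K : Type) (s : nat -> K) : Prop :=
  exists l : list K, forall n, List.In (s n) l.

Definition finite_type (I : Type) : Prop :=
  exists l : list I, forall i, List.In i l.

(* Idempotent ordered TGP-omega-valuation monoid.
   Val is given as a total function on sequences, but all of its axioms
   are only required on finitely-valued sequences (the paper's domain). *)
Record IOTGP := {
  carrier :> Type;
  kadd : carrier -> carrier -> carrier;
  kmul : carrier -> carrier -> carrier;
  ksum : forall I : Type, (I -> carrier) -> carrier;
  kval : (nat -> carrier) -> carrier;
  kzero : carrier;
  kone : carrier;
  add_assoc : forall a b c, kadd a (kadd b c) = kadd (kadd a b) c;
  add_comm : forall a b, kadd a b = kadd b a;
  add_0 : forall a, kadd kzero a = a;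
  sum_empty : forall (I : Type) (g : I -> carrier), (I -> False) -> ksum g = kzero;
  sum_single : forall (I : Type) (g : I -> carrier) (i0 : I),
      (forall i, i = i0) -> ksum g = g i0;
  sum_pair : forall a b, ksum (fun x : bool => if x then a else b) = kadd a b;
  sum_partition : forall (I J : Type) (f : I -> J) (g : I -> carrier),
      ksum g = ksum (fun j : J => ksum (fun x : {i : I | f i = j} => g (proj1_sig x)));
  add_idem : forall a, kadd a a = a;
  (* totally ordered by the natural order  a <= b  iff  b = b + a *)
  le_total : forall a b, b = kadd b a \/ a = kadd a b;
  mul0k : forall a, kmul kzero a = kzero;
  mulk0 : forall a, kmul a kzero = kzero;
  mul1k : forall a, kmul kone a = a;
  mulk1 : forall a, kmul a kone = a;
  val_zero : forall s, fin_valued s -> (exists n, s n = kzero) -> kval s = kzero;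
  val_one : kval (fun _ => kone) = kone;
  sum_mul_one : forall (I : Type) (a : carrier),
      ksum (fun _ : I => kmul a kone) = kmul a (ksum (fun _ : I => kone));
  val_distr : forall (Idx : nat -> Type) (k : forall j, Idx j -> carrier)
      (L : list carrier),
      (forall j, finite_type (Idx j)) ->
      (forall j i, List.In (k j i) L) ->
      (forall j, (forall i, k j i <> kzero /\ k j i <> kone) \/
                 (forall i, k j i = kzero \/ k j i = kone)) ->
      kval (fun j => ksum (k j)) =
      ksum (fun p : (forall j, Idx j) => kval (fun j => k j (p j)));
  val_shift_one : forall s, fin_valued s ->
      kval (fun n => match n with 0 => kone | S m => s m end) = kval s;
  val_head : forall a, kval (fun n => match n with 0 => a | S _ => kone end) = a;
  le_one : forall a, kone = kadd kone a;
  val_lower : forall (s : nat -> carrier) a, fin_valued s ->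
      (forall i, s i = kadd (s i) a) -> kval s = kadd (kval s) a
}.

Definition kle (K : IOTGP) (a b : K) : Prop := b = kadd b a.

Inductive formula (K AP : Type) : Type :=
| FConst of K
| FAtom of AP
| FNegAtom of AP
| FOr of formula K AP & formula K AP
| FAnd of formula K AP & formula K AP
| FNext of formula K AP
| FUntil of formula K AP & formula K AP
| FBox of formula K AP.

Arguments FConst {K AP}.
Arguments FAtom {K AP}.
Arguments FNegAtom {K AP}.
Arguments FOr {K AP}.
Arguments FAnd {K AP}.
Arguments FNext {K AP}.
Arguments FUntil {K AP}.
Arguments FBox {K AP}.

Definition FTrue {K : IOTGP} {AP : Type} : formula K AP := FConst (kone K).
Definition FWUntil {K AP : Type} (f g : formula K AP) : formula K AP :=
  FOr (FBox f) (FUntil f g).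

Definition word (AP : finType) := nat -> {set AP}.
Definition suffix (AP : finType) (w : word AP) (i : nat) : word AP :=
  fun n => w (i + n).

Fixpoint sem (K : IOTGP) (AP : finType) (f : formula K AP) (w : word AP) : K :=
  match f with
  | FConst k => k
  | FAtom a => if a \in w 0 then kone K else kzero K
  | FNegAtom a => if a \in w 0 then kzero K else kone K
  | FOr f1 f2 => kadd (sem f1 w) (sem f2 w)
  | FAnd f1 f2 => kmul (sem f1 w) (sem f2 w)
  | FNext f1 => sem f1 (suffix w 1)
  | FUntil f1 f2 =>
      ksum (fun i : nat =>
        kval (fun n => if n < i then sem f1 (suffix w n)
                      else if n == i then sem f2 (suffix w i)
                      else kone K))
  | FBox f1 => kval (fun n => sem f1 (suffix w n))
  end.

Inductive sbLTL (K : IOTGP) (AP : Type) : formula K AP -> Prop :=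
| sb_true : sbLTL FTrue
| sb_atom a : sbLTL (FAtom a)
| sb_natom a : sbLTL (FNegAtom a)
| sb_or f g : sbLTL f -> sbLTL g -> sbLTL (FOr f g)
| sb_and f g : sbLTL f -> sbLTL g -> sbLTL (FAnd f g)
| sb_next f : sbLTL f -> sbLTL (FNext f)
| sb_wuntil f g : sbLTL f -> sbLTL g -> sbLTL (FWUntil f g)
| sb_box f : sbLTL f -> sbLTL (FBox f).

Definition Lk_proper (K : IOTGP) (k k' : K) : Prop :=
  kle k k' /\ k' <> kzero K /\ k' <> kone K.

Inductive stLTL (K : IOTGP) (AP : Type) (k : K) : formula K AP -> Prop :=
| st_base k' f : Lk_proper k k' -> sbLTL f -> stLTL k (FAnd (FConst k') f)
| st_or f g : stLTL k f -> stLTL k g -> stLTL k (FOr f g).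

Inductive tRULTL (K : IOTGP) (AP : Type) (k : K) : formula K AP -> Prop :=
| r_const k' : kle k k' -> tRULTL k (FConst k')
| r_sb f : sbLTL f -> tRULTL k f
| r_st f : stLTL k f -> tRULTL k f
| r_next f : tRULTL k f -> tRULTL k (FNext f)
| r_or f g : tRULTL k f -> tRULTL k g -> tRULTL k (FOr f g)
| r_and_l f g : sbLTL f ->
    (stLTL k g \/
     (exists x l, stLTL k x /\ stLTL k l /\ g = FWUntil x l) \/
     (exists x, stLTL k x /\ g = FBox x)) ->
    tRULTL k (FAnd f g)
| r_and_r f g : sbLTL f ->
    (stLTL k g \/
     (exists x l, stLTL k x /\ stLTL k l /\ g = FWUntil x l) \/
     (exists x, stLTL k x /\ g = FBox x)) ->
    tRULTL k (FAnd g f)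
| r_wuntil f g : stLTL k f -> stLTL k g -> tRULTL k (FWUntil f g)
| r_box f : stLTL k f -> tRULTL k (FBox f).

Definition concat_prefix (AP : finType) (w : word AP) (i : nat) (u : word AP)
  : word AP := fun n => if n < i then w n else u (n - i).

Definition k_safe (K : IOTGP) (AP : finType) (k : K) (s : word AP -> K) : Prop :=
  forall w : word AP,
    (forall i, 0 < i -> exists u : word AP, kle k (s (concat_prefix w i u))) ->
    kle k (s w).

(* Main.v *)
Require Import Defs.
From HB Require Import structures.
From mathcomp Require Import all_boot.
From mathcomp Require Import zify.
From Stdlib Require Import Classical FunctionalExtensionality.
Local Notation suffix := Defs.suffix.
Set Implicit Arguments.
Unset Strict Implicit.

Section Closed.
Variable AP : finType.
Definition agree (B : nat) (w v : word AP) := forall n, n < B -> w n = v n.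
Definition wclosed (P : word AP -> Prop) :=
  forall w, (forall B, exists v, agree B w v /\ P v) -> P w.

Lemma agree_mono B B' w v : B' <= B -> agree B w v -> agree B' w v.
Proof. move=> le h n hn; apply: h; lia. Qed.

Lemma agree_suffix j B w v : agree (j + B) w v -> agree B (suffix w j) (suffix v j).
Proof. move=> h n hn; rewrite /suffix; apply: h; lia. Qed.

Lemma C_ext (P Q : word AP -> Prop) : wclosed P -> (forall w, P w <-> Q w) -> wclosed Q.
Proof.
move=> cP e w H; apply/e; apply: cP => B; have [v [a q]] := H B.
by exists v; split => //; apply/e.
Qed.

Arguments C_ext {P Q}.

Lemma C_true : wclosed (fun _ => True).
Proof. by move=> w _. Qed.

Lemma C_and P Q : wclosed P -> wclosed Q -> wclosed (fun w => P w /\ Q w).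
Proof.
move=> cP cQ w H; split; [apply: cP|apply: cQ] => B; have [v [a [p q]]] := H B;
  by exists v.
Qed.

Lemma C_or P Q : wclosed P -> wclosed Q -> wclosed (fun w => P w \/ Q w).
Proof.
move=> cP cQ w H.
case: (classic (forall B, exists v, agree B w v /\ P v)) => [h|h]; first by left; apply: cP.
case: (classic (forall B, exists v, agree B w v /\ Q v)) => [h'|h']; first by right; apply: cQ.
exfalso; move: h => /not_all_ex_not [B1 h1]; move: h' => /not_all_ex_not [B2 h2].
have [v [a [p|q]]] := H (maxn B1 B2).
- apply: h1; exists v; split => //; apply: agree_mono a; exact: leq_maxl.
- apply: h2; exists v; split => //; apply: agree_mono a; exact: leq_maxr.
Qed.

Lemma C_shift P m : wclosed P -> wclosed (fun w => P (suffix w m)).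
Proof.
move=> cP w H; apply: cP => B; have [v [a p]] := H (m + B).
exists (suffix v m); split => //; exact: agree_suffix.
Qed.

Lemma C_forall (P : nat -> word AP -> Prop) :
  (forall n, wclosed (P n)) -> wclosed (fun w => forall n, P n w).
Proof. move=> c w H n; apply: (c n) => B; have [v [a p]] := H B; by exists v. Qed.

Lemma C_atom a : wclosed (fun w => a \in w 0).
Proof. by move=> w H; have [v [ag p]] := H 1; rewrite ag. Qed.

Lemma C_natom a : wclosed (fun w => a \notin w 0).
Proof. by move=> w H; have [v [ag p]] := H 1; rewrite ag. Qed.

Lemma local' P j w : wclosed P ->
  exists D, ~ P (suffix w j) -> forall v, agree D w v -> ~ P (suffix v j).
Proof.
move=> cP; case: (classic (P (suffix w j))) => h; first by exists 0.
have : ~ (forall B, exists v, agree B (suffix w j) v /\ P v) by move=> hh; apply: h; apply: cP.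
move=> /not_all_ex_not [B hB]; exists (j + B) => _ v a pv; apply: hB.
exists (suffix v j); split => //; exact: agree_suffix.
Qed.

Lemma fin_bound (R : nat -> nat -> Prop) : (forall j, exists D, R j D) ->
  (forall j D D', D <= D' -> R j D -> R j D') -> forall m, exists D, forall j, j <= m -> R j D.
Proof.
move=> h mono; elim=> [|m [D hD]].
- have [D hD] := h 0; exists D => j; rewrite leqn0 => /eqP ->; done.
- have [D' hD'] := h m.+1; exists (maxn D D') => j; rewrite leq_eqVlt => /orP [/eqP ->|hj].
  + apply: mono hD'; exact: leq_maxr.
  + rewrite ltnS in hj; apply: mono (hD j hj); exact: leq_maxl.
Qed.

Lemma C_wuntil P Q : wclosed P -> wclosed Q ->
  wclosed (fun w => (forall n, P (suffix w n)) \/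
     exists i, (forall n, n < i -> P (suffix w n)) /\ Q (suffix w i)).
Proof.
move=> cP cQ w H.
case: (classic (forall n, P (suffix w n))) => [h|/not_all_ex_not [m hm]]; first by left.
right.
pose R j D := (~ P (suffix w j) -> forall v, agree D w v -> ~ P (suffix v j)) /\
              (~ Q (suffix w j) -> forall v, agree D w v -> ~ Q (suffix v j)).
have [D hD] : exists D, forall j, j <= m -> R j D.
  apply: fin_bound.
  - move=> j; have [D1 h1] := local' j w cP; have [D2 h2] := local' j w cQ.
    exists (maxn D1 D2); split => hn v a; [apply: (h1 hn v) | apply: (h2 hn v)];
      apply: agree_mono a; [exact: leq_maxl|exact: leq_maxr].
  - move=> j D0 D' le [h1 h2]; split => hn v a; [apply: (h1 hn v)|apply: (h2 hn v)];
      exact: agree_mono a.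
have [v [a hv]] := H D.
have hvm : ~ P (suffix v m) := (hD m (leqnn m)).1 hm v a.
case: hv => [allP|[i [hi qi]]]; first by exfalso; exact: hvm (allP m).
have im : i <= m.
  rewrite leqNgt; apply/negP => mi; exact: hvm (hi m mi).
exists i; split.
- move=> n ni; apply: NNPP => np.
  have nm : n <= m by lia.
  exact: ((hD n nm).1 np v a) (hi n ni).
- apply: NNPP => nq; exact: (hD i im).2 nq v a qi.
Qed.
End Closed.

Section Alg.
Variable K : IOTGP.
Implicit Types a b c : K.

Lemma kle_trans a b c : kle a b -> kle b c -> kle a c.
Proof. rewrite /kle => hab hbc; rewrite hbc -add_assoc -hab -hbc //. Qed.

Lemma kle_0 a : kle a (kzero K) -> a = kzero K.
Proof. by rewrite /kle add_0 => ->. Qed.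

Lemma kle_1 a : kle a (kone K).
Proof. exact: le_one. Qed.

Lemma kle_addl a b c : kle a b -> kle a (kadd b c).
Proof.
rewrite /kle => h. rewrite -(add_assoc b c a) (add_comm c a) (add_assoc b a c) -h //.
Qed.

Lemma kle_addr a b c : kle a c -> kle a (kadd b c).
Proof. rewrite add_comm; exact: kle_addl. Qed.

Lemma kle_add_iff a b c : kle a (kadd b c) <-> kle a b \/ kle a c.
Proof.
split.
- move=> H; case: (le_total b c) => h.
  + by right; rewrite add_comm -h in H.
  + by left; rewrite -h in H.
- by case=> h; [apply: kle_addl|apply: kle_addr].
Qed.

Lemma ksum_ge (g : nat -> K) j :
  ksum g = kadd (g j) (ksum (fun x : {i : nat | (i == j) = false} => g (sval x))).
Proof.
rewrite (sum_partition (fun i => i == j) g).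
have -> : (fun b : bool => ksum (fun x : {i | (i == j) = b} => g (sval x))) =
  (fun b : bool => if b then g j else ksum (fun x : {i | (i == j) = false} => g (sval x))).
  apply: functional_extensionality => -[]; last done.
  have e : (j == j) = true := eqxx j.
  apply: (sum_single _ (i0 := exist _ j e)) => -[i hi].
  have ij := eqP hi; subst i; by rewrite (eq_irrelevance hi e).
exact: sum_pair.
Qed.

Lemma ksum_top (g : nat -> K) j : g j = kone K -> ksum g = kone K.
Proof. by rewrite (ksum_ge g j) => ->; rewrite -le_one. Qed.

Lemma ksum_lb k (g : nat -> K) j : kle k (g j) -> kle k (ksum g).
Proof. rewrite (ksum_ge g j); exact: kle_addl. Qed.

Lemma ksum_zero : ksum (fun _ : nat => kzero K) = kzero K.
Proof.
have := sum_partition (I:=unit) (J:=nat) (fun _ => 0) (fun _ => kzero K).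
rewrite (sum_single _ (i0 := tt)); last by case.
move=> e; rewrite [RHS]e; apply: f_equal; apply: functional_extensionality => j.
case: j => [|n].
- symmetry; apply: (sum_single _ (i0 := exist _ tt erefl)) => -[[] h].
  by rewrite (eq_irrelevance h erefl).
- by symmetry; apply: sum_empty => -[_ h].
Qed.
End Alg.

Section Sem.
Variables (K : IOTGP) (AP : finType) (k : K).
Hypothesis hk0 : k <> kzero K.

Definition S (f : formula K AP) (w : word AP) := kle k (sem f w).
Definition isbool (f : formula K AP) := forall w, sem f w = kzero K \/ sem f w = kone K.
Definition good (f : formula K AP) :=
  (exists L, forall w, List.In (sem f w) L) /\
  forall w, sem f w = kzero K \/ kle k (sem f w).

Lemma notS0 : ~ kle k (kzero K).
Proof. by move=> /kle_0. Qed.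

Lemma bool_good f : isbool f -> good f.
Proof.
move=> H; split.
- by exists [:: kzero K; kone K] => w; case: (H w) => ->; simpl; tauto.
- by move=> w; case: (H w) => ->; [left|right; exact: kle_1].
Qed.

Lemma kval_char (s : nat -> K) : fin_valued s -> (forall n, s n = kzero K \/ kle k (s n)) ->
  (kle k (kval s) <-> forall n, kle k (s n)) /\ (kval s = kzero K \/ kle k (kval s)).
Proof.
move=> fv d.
case: (classic (exists n, s n = kzero K)) => [[n hn]|hn].
- have z := val_zero fv (ex_intro _ n hn); rewrite z; split; last by left.
  split=> [/notS0 []|h]; exfalso; apply: notS0; rewrite -hn; exact: h n.
- have all : forall n, kle k (s n).
    by move=> n; case: (d n) => // h; exfalso; apply: hn; exists n.
  have l := val_lower fv all.
  by split; [split=> // _ | right].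
Qed.

Lemma kval_bool (s : nat -> K) : (forall n, s n = kzero K \/ s n = kone K) ->
  kval s = kzero K \/ kval s = kone K.
Proof.
move=> d; have fv : fin_valued s.
  by exists [:: kzero K; kone K] => n; case: (d n) => ->; simpl; tauto.
case: (classic (exists n, s n = kzero K)) => [h|hn]; first by left; exact: val_zero fv h.
right; have -> : s = (fun _ => kone K).
  apply: functional_extensionality => n; case: (d n) => // h; exfalso; apply: hn; by exists n.
exact: val_one.
Qed.

Lemma box_char f : good f -> forall w, S (FBox f) w <-> forall n, S f (suffix w n).
Proof.
move=> [[L hL] d] w; rewrite /S /=.
have fv : fin_valued (fun n => sem f (suffix w n)) by exists L => n; exact: hL.
have := kval_char fv (fun n => d (suffix w n)).
by case.
Qed.

Lemma box_bool f : isbool f -> isbool (FBox f).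
Proof. move=> b w /=; apply: kval_bool => n; exact: b. Qed.

Lemma until_char f g : good f -> good g -> forall w,
  S (FUntil f g) w <-> exists i, (forall n, n < i -> S f (suffix w n)) /\ S g (suffix w i).
Proof.
move=> [[Lf hf] df] [[Lg hg] dg] w; rewrite /S /=.
have key i := @kval_char (fun n => if n < i then sem f (suffix w n)
        else if n == i then sem g (suffix w i) else kone K).
have fvi i : fin_valued (fun n => if n < i then sem f (suffix w n)
        else if n == i then sem g (suffix w i) else kone K).
  exists (Lf ++ Lg ++ [:: kone K]) => n.
  apply: List.in_or_app; case: ifP => _; first by left; exact: hf.
  right; apply: List.in_or_app; case: ifP => _; [left; exact: hg|right; simpl; tauto].
have di i n : (fun n => if n < i then sem f (suffix w n)
        else if n == i then sem g (suffix w i) else kone K) n = kzero K \/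
      kle k ((fun n => if n < i then sem f (suffix w n)
        else if n == i then sem g (suffix w i) else kone K) n).
  case: ifP => _; first exact: df.
  case: ifP => _; [exact: dg|right; exact: kle_1].
have key' i := key i (fvi i) (di i).
split.
- move=> H.
  case: (classic (exists i, kle k (kval (fun n => if n < i then sem f (suffix w n)
        else if n == i then sem g (suffix w i) else kone K)))) => [[i hi]|hn].
  + exists i; have all := (key' i).1.1 hi; split.
    * by move=> n ni; have := all n; rewrite ni.
    * by have := all i; rewrite ltnn eqxx.
  + exfalso; apply: notS0.
    suff <- : ksum (fun i => kval (fun n => if n < i then sem f (suffix w n)
        else if n == i then sem g (suffix w i) else kone K)) = kzero K by [].
    rewrite -(ksum_zero K); apply: f_equal; apply: functional_extensionality => i.
    case: (key' i).2 => // h; exfalso; apply: hn; by exists i.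
- move=> [i [h1 h2]]; apply: (@ksum_lb K k _ i); apply/(key' i).1 => n.
  case: ifP => ni; first exact: h1.
  case: ifP => /eqP e; [by subst n | exact: kle_1].
Qed.

Lemma until_bool f g : isbool f -> isbool g -> isbool (FUntil f g).
Proof.
move=> bf bg w /=.
have kb i : kval (fun n => if n < i then sem f (suffix w n)
        else if n == i then sem g (suffix w i) else kone K) = kzero K \/
     kval (fun n => if n < i then sem f (suffix w n)
        else if n == i then sem g (suffix w i) else kone K) = kone K.
  apply: kval_bool => n; case: ifP => _; first exact: bf.
  case: ifP => _; [exact: bg| by right].
case: (classic (exists i, kval (fun n => if n < i then sem f (suffix w n)
        else if n == i then sem g (suffix w i) else kone K) = kone K)) => [[i hi]|hn].
- by right; exact: ksum_top hi.
- left; rewrite -(ksum_zero K); apply: f_equal; apply: functional_extensionality => i.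
  case: (kb i) => // h; exfalso; apply: hn; by exists i.
Qed.

Lemma bool_or f g : isbool f -> isbool g -> isbool (FOr f g).
Proof.
move=> bf bg w /=; case: (bf w) => ->; first by rewrite add_0; exact: bg.
by right; rewrite -le_one.
Qed.

Lemma bool_and f g : isbool f -> isbool g -> isbool (FAnd f g).
Proof.
move=> bf bg w /=; case: (bf w) => ->; first by rewrite mul0k; left.
by rewrite mul1k; exact: bg.
Qed.

Lemma good_or f g : good f -> good g -> good (FOr f g).
Proof.
move=> [[L1 h1] d1] [[L2 h2] d2]; split.
- exists (List.flat_map (fun a => List.map (fun b => kadd a b) L2) L1) => w /=.
  apply/List.in_flat_map; exists (sem f w); split => //; exact: List.in_map.
- move=> w /=; case: (d1 w) => [->|h]; first by rewrite add_0; exact: d2.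
  right; exact: kle_addl.
Qed.

Lemma S_mul_l (a b : K) : a = kzero K \/ a = kone K ->
  (kle k (kmul a b) <-> kle k a /\ kle k b).
Proof.
case=> ->.
- by rewrite mul0k; split=> [/notS0 []|[/notS0 []]].
- by rewrite mul1k; split=> [h|[]//]; split=> //; exact: kle_1.
Qed.

Lemma S_mul_r (a b : K) : b = kzero K \/ b = kone K ->
  (kle k (kmul a b) <-> kle k a /\ kle k b).
Proof.
case=> ->.
- by rewrite mulk0; split=> [/notS0 []|[_ /notS0 []]].
- by rewrite mulk1; split=> [h|[]//]; split=> //; exact: kle_1.
Qed.

Lemma box_closed f : good f -> wclosed (S f) -> wclosed (S (FBox f)).
Proof.
move=> gf cf.
have c := @C_forall _ (fun n w => S f (suffix w n)) (fun n => C_shift (m:=n) cf).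
apply: (C_ext c) => w.
apply: iff_sym; exact: box_char.
Qed.

Lemma wuntil_closed f g : good f -> good g -> wclosed (S f) -> wclosed (S g) ->
  wclosed (S (FWUntil f g)).
Proof.
move=> gf gg cf cg; apply: (C_ext (C_wuntil cf cg)) => w.
have hb := box_char gf w; have hu := until_char gf gg w.
have ha := kle_add_iff k (sem (FBox f) w) (sem (FUntil f g) w).
move: hb hu ha; rewrite /S /FWUntil.
move: (kle k (sem (FBox f) w)) (kle k (sem (FUntil f g) w)) => X Y.
rewrite [sem (FOr _ _) w]/=.
tauto.
Qed.

Lemma sb_facts f : sbLTL f -> isbool f /\ wclosed (S f).
Proof.
elim => [|a|a|f1 g1 _ [bf cf] _ [bg cg]|f1 g1 _ [bf cf] _ [bg cg]|f1 _ [bf cf]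
        |f1 g1 _ [bf cf] _ [bg cg]|f1 _ [bf cf]].
- split; first by move=> w; right.
  apply: (C_ext (@C_true AP)) => w; split=> // _; exact: kle_1.
- split; first by move=> w /=; case: ifP => _; [right|left].
  apply: (C_ext (C_atom (a:=a))) => w; rewrite /S /=; case: (a \in w 0).
  + by split=> // _; exact: kle_1.
  + by split=> // /notS0.
- split; first by move=> w /=; case: ifP => _; [left|right].
  apply: (C_ext (C_natom (a:=a))) => w; rewrite /S /=; case: (a \in w 0).
  + by split=> // /notS0.
  + by split=> // _; exact: kle_1.
- split; first exact: bool_or.
  apply: (C_ext (C_or cf cg)) => w; rewrite /S /=; apply: iff_sym; exact: kle_add_iff.
- split; first exact: bool_and.
  apply: (C_ext (C_and cf cg)) => w; rewrite /S /=; apply: iff_sym; exact: S_mul_l (bf w).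
- split; first by move=> w; exact: bf.
  by apply: (C_ext (C_shift (m:=1) cf)) => w.
- split; first exact: bool_or (box_bool bf) (until_bool bf bg).
  apply: wuntil_closed => //; exact: bool_good.
- split; first exact: box_bool.
  apply: box_closed => //; exact: bool_good.
Qed.

Lemma st_facts f : stLTL k f -> good f /\ wclosed (S f).
Proof.
elim => [k' f1 [hk' [h0 h1]] hsb | f1 g1 _ [gf cf] _ [gg cg]].
- have [bf cf] := sb_facts hsb; split; first split.
  + exists [:: kzero K; k'] => w /=; case: (bf w) => ->; [rewrite mulk0|rewrite mulk1];
      simpl; tauto.
  + move=> w /=; case: (bf w) => ->; [rewrite mulk0; left|rewrite mulk1; right] => //.
  + apply: (C_ext cf) => w; rewrite /S /=; case: (bf w) => ->.
    * by rewrite mulk0.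
    * rewrite mulk1; split=> _ //; exact: kle_1.
- split; first exact: good_or.
  apply: (C_ext (C_or cf cg)) => w; rewrite /S /=; apply: iff_sym; exact: kle_add_iff.
Qed.

Lemma and_side g : (stLTL k g \/
     (exists x l, stLTL k x /\ stLTL k l /\ g = FWUntil x l) \/
     (exists x, stLTL k x /\ g = FBox x)) -> wclosed (S g).
Proof.
case=> [h|[[x [l [hx [hl ->]]]]|[x [hx ->]]]].
- exact: (st_facts h).2.
- have [gx cx] := st_facts hx; have [gl cl] := st_facts hl; exact: wuntil_closed.
- have [gx cx] := st_facts hx; exact: box_closed.
Qed.

Lemma rul_closed f : tRULTL k f -> wclosed (S f).
Proof.
elim => [k' hk'|f1 hf|f1 hf|f1 _ cf|f1 g1 _ cf _ cg|f1 g1 hf hg|f1 g1 hf hg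
        |f1 g1 hf hg|f1 hf].
- by apply: (C_ext (@C_true AP)) => w; split.
- exact: (sb_facts hf).2.
- exact: (st_facts hf).2.
- by apply: (C_ext (C_shift (m:=1) cf)) => w.
- apply: (C_ext (C_or cf cg)) => w; rewrite /S /=; apply: iff_sym; exact: kle_add_iff.
- have [bf cf] := sb_facts hf.
  apply: (C_ext (C_and cf (and_side hg))) => w; rewrite /S /=; apply: iff_sym; exact: S_mul_l (bf w).
- have [bf cf] := sb_facts hf.
  apply: (C_ext (C_and (and_side hg) cf)) => w; rewrite /S /=; apply: iff_sym; exact: S_mul_r (bf w).
- have [gx cx] := st_facts hf; have [gl cl] := st_facts hg; exact: wuntil_closed.
- have [gx cx] := st_facts hf; exact: box_closed.
Qed.
End Sem.

Theorem theorem6 (K : IOTGP) (AP : finType) (k : K)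
  (hk0 : k <> kzero K) (hk1 : k <> kone K)
  (phi : formula K AP) (hphi : tRULTL k phi) :
  k_safe k (sem phi).
Proof.
move=> w H; apply: (rul_closed hk0 hphi) => B.
have [u hu] := H B.+1 (ltn0Sn B).
exists (concat_prefix w B.+1 u); split => // n hn.
have hn' : n < B.+1 by lia.
by rewrite /concat_prefix hn'.
Qed.
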